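(* Let $A\in\mathbb{R}_+^{m\times n}$, $y\in\mathbb{Z}_+^m$, $\beta>0$, and $F(f)=\mathbb{1}^TAf-\sum_{i=1}^m y_i\log(e_i^TAf+\beta)$. Let $\tau>0$ and $\mathrm{pen}:\mathbb{R}^n\to\mathbb{R}$, and set $\rho(f)=\tau\,\mathrm{pen}(f)+\delta_+(f)$, where $\delta_+(f)=0$ if $f\ge 0$ (componentwise) and $\delta_+(f)=+\infty$ otherwise. Assume: (A1) $F$ is proper convex and Lipschitz continuously differentiable on $\mathbb{R}_+^n$; (A2) $\rho$ is proper convex and continuous on $\mathbb{R}_+^n$. Let $\alpha_{\min}>0$. Consider sequences $\{f^k\}\subset\mathbb{R}_+^n$ and $\{\alpha_k\}\subset(0,\infty)$ such that for each $k$, $$f^{k+1}\in\arg\min_{f\in\mathbb{R}^n}\; (f-f^k)^T\nabla F(f^k)+\tfrac{\alpha_k}{2}\|f-f^k\|_2^2+\rho(f).$$ Suppose $\bar f\in\mathbb{R}_+^n$ is not critical for $\min_f F(f)+\rho(f)$, i.e. $0\notin\nabla F(\bar f)+\partial\rho(\bar f)$. Then for any $\bar\alpha\ge\alpha_{\min}$ there exists $\epsilon>0$ such that for any subsequence $\{f^{k_j}\}_{j\in\mathbb{Z}_+}$ with $\lim_{j\to\infty}f^{k_j}=\bar f$, $f^{k_j}\in\mathbb{R}_+^n$ for all $j$, and $\alpha_{\min}\le\alpha_{k_j}\le\bar\alpha$, we have $\|f^{k_j+1}-f^{k_j}\|_2\ge\epsilon$ for all $j$ sufficiently large.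
   Context: $\partial\rho$ denotes the subdifferential (set of subgradients) of the convex function $\rho$. $\mathbb{1}$ is the all-ones vector and $e_i$ the $i$-th canonical basis vector of $\mathbb{R}^m$. *)

(* Defs.v *)
From HB Require Import structures.
From mathcomp Require Import all_boot all_order all_algebra.
From mathcomp Require Import all_classical all_reals all_analysis.
Set Implicit Arguments. Unset Strict Implicit. Unset Printing Implicit Defensive.
Import Order.TTheory GRing.Theory Num.Theory.
Import numFieldNormedType.Exports.
Local Open Scope classical_set_scope.
Local Open Scope ring_scope.

Section Defs.
Variables (R : realType) (m n : nat).

Definition nonneg (f : 'cV[R]_n) : bool := [forall i, 0 <= f i 0].

Definition dotv (u v : 'cV[R]_n) : R := \sum_i u i 0 * v i 0.
Definition norm2 (u : 'cV[R]_n) : R := Num.sqrt (dotv u u).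

Definition poissonF (A : 'M[R]_(m, n)) (y : 'I_m -> nat) (beta : R)
  (f : 'cV[R]_n) : R :=
  \sum_i (A *m f) i 0 - \sum_i (y i)%:R * ln ((A *m f) i 0 + beta).

Definition grad (F : 'cV[R]_n -> R) (f : 'cV[R]_n) : 'cV[R]_n :=
  \col_j ('d F f (delta_mx j 0 : 'cV[R]_n)).

Definition rho_pen (tau : R) (pen : 'cV[R]_n -> R) (f : 'cV[R]_n) : \bar R :=
  if nonneg f then (tau * pen f)%:E else +oo%E.

Definition subdiff (r : 'cV[R]_n -> \bar R) (x : 'cV[R]_n) : set 'cV[R]_n :=
  [set g | forall h, (r x + (dotv g (h - x))%:E <= r h)%E].

Definition convex_ext (r : 'cV[R]_n -> \bar R) : Prop :=
  forall (f g : 'cV[R]_n) (t : R), 0 <= t <= 1 ->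
    (r (t *: f + (1 - t) *: g)%R <= t%:E * r f + (1 - t)%:E * r g)%E.
Definition proper_ext (r : 'cV[R]_n -> \bar R) : Prop :=
  (exists f, (r f < +oo)%E) /\ (forall f, (-oo < r f)%E).

Definition convex_on_nonneg (F : 'cV[R]_n -> R) : Prop :=
  forall (f g : 'cV[R]_n) (t : R), nonneg f -> nonneg g -> 0 <= t <= 1 ->
    F (t *: f + (1 - t) *: g) <= t * F f + (1 - t) * F g.

Definition lipschitz_diff_on_nonneg (F : 'cV[R]_n -> R) : Prop :=
  (forall f, nonneg f -> differentiable F f) /\
  exists L : R, forall f g, nonneg f -> nonneg g ->
    norm2 (grad F f - grad F g) <= L * norm2 (f - g).

Definition prox_obj (F : 'cV[R]_n -> R) (r : 'cV[R]_n -> \bar R)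
  (fk : 'cV[R]_n) (alpha : R) (f : 'cV[R]_n) : \bar R :=
  ((dotv (f - fk) (grad F fk) + alpha / 2 * norm2 (f - fk) ^+ 2)%:E + r f)%E.

Definition critical (F : 'cV[R]_n -> R) (r : 'cV[R]_n -> \bar R)
  (x : 'cV[R]_n) : Prop :=
  exists g, subdiff r x g /\ grad F x + g = 0.

End Defs.

(* Main.v *)
Require Import Defs.
From HB Require Import structures.
From mathcomp Require Import all_boot all_order all_algebra.
From mathcomp Require Import all_classical all_reals all_analysis.
From mathcomp Require Import ring lra.
Import Order.TTheory GRing.Theory Num.Theory.
Import numFieldNormedType.Exports.
Local Open Scope classical_set_scope.
Local Open Scope ring_scope.

Section Helpers.
Variables (R : realType) (n : nat).
Implicit Types (u v w : 'cV[R]_n).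

Lemma dotv_ge0 u : 0 <= dotv u u.
Proof. by rewrite /dotv; apply: sumr_ge0 => i _; rewrite -expr2 sqr_ge0. Qed.

Lemma norm2_sq u : norm2 u ^+ 2 = dotv u u.
Proof. by rewrite /norm2 sqr_sqrtr // dotv_ge0. Qed.

Lemma dotvC u v : dotv u v = dotv v u.
Proof. by rewrite /dotv; apply: eq_bigr => i _; rewrite mulrC. Qed.

Lemma dotvZl (a : R) u v : dotv (a *: u) v = a * dotv u v.
Proof. by rewrite /dotv mulr_sumr; apply: eq_bigr => i _; rewrite mxE mulrA. Qed.

Lemma dotvNl u v : dotv (- u) v = - dotv u v.
Proof. by rewrite /dotv -sumrN; apply: eq_bigr => i _; rewrite mxE mulNr. Qed.

Lemma comp_le_norm2 u i : `|u i 0| <= norm2 u.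
Proof.
rewrite /norm2 -sqrtr_sqr; apply: ler_wsqrtr.
rewrite /dotv (bigD1 i) //= -expr2 lerDl.
by apply: sumr_ge0 => j _; rewrite -expr2 sqr_ge0.
Qed.

Lemma cvg_sum_seq (I : Type) (r : seq I) (a : I -> nat -> R) (l : I -> R) :
  (forall i, a i @ \oo --> l i) ->
  (fun k => \sum_(i <- r) a i k) @ \oo --> \sum_(i <- r) l i.
Proof.
move=> H; elim: r => [|x r IH].
  rewrite big_nil; under eq_fun do rewrite big_nil; exact: cvg_cst.
rewrite big_cons; under eq_fun do rewrite big_cons; exact: cvgD.
Qed.

Lemma dotv_cvg (a b : nat -> 'cV[R]_n) (x y : 'cV[R]_n) :
  (forall i, (fun k => a k i 0) @ \oo --> x i 0) ->
  (forall i, (fun k => b k i 0) @ \oo --> y i 0) ->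
  (fun k => dotv (a k) (b k)) @ \oo --> dotv x y.
Proof.
move=> Ha Hb; rewrite /dotv; apply: cvg_sum_seq => i; exact: cvgM.
Qed.

Lemma cvg_by_bound (V : pseudoMetricNormedZmodType R) (a : nat -> V) x (b : nat -> R) :
  (forall k, `|x - a k| <= b k) -> b @ \oo --> 0 -> a @ \oo --> x.
Proof.
move=> Hab /cvgrPdist_lt Hb; apply/cvgrPdist_lt => e e0.
have := Hb e e0; apply: filterS => k; rewrite sub0r normrN => Hk.
exact: le_lt_trans (Hab k) (le_lt_trans (ler_norm _) Hk).
Qed.

Lemma mx_comp_le (M : 'M[R]_(n, 1)) i j : `|M i j| <= `|M|.
Proof.
rewrite [X in _ <= X]/Num.norm /= mx_normrE.
exact: (le_bigmax _ (fun ij : 'I_n * 'I_1 => `|M ij.1 ij.2|) (i, j)).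
Qed.

Lemma mx_le_norm2 u : `|u| <= norm2 u.
Proof.
rewrite [X in X <= _]/Num.norm /= mx_normrE.
apply: bigmax_le; first by rewrite /norm2 sqrtr_ge0.
by move=> [i j] _ /=; rewrite (ord1 j); exact: comp_le_norm2.
Qed.

End Helpers.
Arguments dotv_ge0 {R n}. Arguments norm2_sq {R n}. Arguments dotvC {R n}.
Arguments dotvZl {R n}. Arguments dotvNl {R n}. Arguments comp_le_norm2 {R n}.
Arguments dotv_cvg {R n}. Arguments mx_comp_le {R n}. Arguments mx_le_norm2 {R n}.
Arguments cvg_by_bound {R V} a x b.

Lemma cvg_compB (R : realType) (n : nat) (a b : nat -> 'cV[R]_n) (x y : 'cV[R]_n) :
  (forall i, (fun k => a k i 0) @ \oo --> x i 0) ->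
  (forall i, (fun k => b k i 0) @ \oo --> y i 0) ->
  forall i, (fun k => (a k - b k) i 0) @ \oo --> (x - y) i 0.
Proof.
move=> Ha Hb i; rewrite !mxE; under eq_fun do rewrite !mxE.
exact: (cvgB (Ha i) (Hb i)).
Qed.

Theorem lemma2 (R : realType) (m n : nat) (A : 'M[R]_(m, n)) (y : 'I_m -> nat)
  (beta tau : R) (pen : 'cV[R]_n -> R) (alpha_min : R)
  (f : nat -> 'cV[R]_n) (alpha : nat -> R) (fbar : 'cV[R]_n) :
  (forall i j, 0 <= A i j) -> 0 < beta -> 0 < tau ->
  (* (A1) *)
  convex_on_nonneg (poissonF A y beta) ->
  lipschitz_diff_on_nonneg (poissonF A y beta) ->
  (* (A2) *)
  proper_ext (rho_pen tau pen) -> convex_ext (rho_pen tau pen) ->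
  {within [set x | nonneg x], continuous (rho_pen tau pen)} ->
  0 < alpha_min ->
  (forall k, nonneg (f k)) -> (forall k, 0 < alpha k) ->
  (forall k g, (prox_obj (poissonF A y beta) (rho_pen tau pen) (f k) (alpha k) (f k.+1)
               <= prox_obj (poissonF A y beta) (rho_pen tau pen) (f k) (alpha k) g)%E) ->
  nonneg fbar ->
  ~ critical (poissonF A y beta) (rho_pen tau pen) fbar ->
  forall alpha_bar, alpha_min <= alpha_bar ->
  exists eps : R, 0 < eps /\
    forall kk : nat -> nat, (forall j, (kk j < kk j.+1)%N) ->
      (fun j => f (kk j)) @ \oo --> fbar ->
      (forall j, nonneg (f (kk j))) ->
      (forall j, alpha_min <= alpha (kk j) <= alpha_bar) ->
      exists J : nat, forall j, (J <= j)%N ->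
        eps <= norm2 (f (kk j).+1 - f (kk j)).
Proof.
move=> A0 b0 t0 Fconv [Fdiff [L HL]] Hprop Hconv Hcont am0 fnn alp0 Hmin fbnn
  Hncrit abar Habar.
apply: contrapT => Hne.
have key : forall l, exists k, [/\ `|fbar - f k| < harmonic l,
    norm2 (f k.+1 - f k) < harmonic l & alpha k <= abar].
  move=> l; apply: contrapT => Hk; apply: Hne; exists (harmonic l); split.
    exact: harmonic_gt0.
  move=> kk _ cv _ ab.
  have hl : (0:R) < harmonic l by exact: harmonic_gt0.
  have := (@cvgrPdist_lt R _ nat _ _ _ fbar).1 cv _ hl.
  move=> [J _ HJ].
  exists J => j Jj; rewrite leNgt; apply/negP => lt; apply: Hk; exists (kk j).
  by split => //; [exact: HJ | case/andP: (ab j)].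
have [k Hk] := choice key.
have B2 : forall l, `|fbar - f (k l).+1| <= 2 * harmonic l.
  move=> l; have [H1 H2 _] := Hk l.
  have -> : fbar - f (k l).+1 = (fbar - f (k l)) + (f (k l) - f (k l).+1).
    by rewrite addrA subrK.
  apply: le_trans (ler_normD _ _) _.
  have H3 : `|f (k l) - f (k l).+1| <= harmonic l.
    by rewrite distrC; apply: le_trans (mx_le_norm2 _) (ltW H2).
  have := ltW H1; lra.
have h2 : (fun l => 2 * harmonic l) @ \oo --> (0 : R).
  rewrite -(mulr0 2); apply: cvgMr; exact: cvg_harmonic.
have Hu : forall i, (fun l => f (k l) i 0) @ \oo --> fbar i 0.
  move=> i; apply: (cvg_by_bound _ _ (harmonic)); last exact: cvg_harmonic.
  move=> l; have [H1 _ _] := Hk l.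
  have := mx_comp_le (fbar - f (k l)) i 0; rewrite !mxE => H.
  exact: le_trans H (ltW H1).
have Hvmx : (fun l => f (k l).+1) @ \oo --> fbar.
  exact: (cvg_by_bound _ _ (fun l => 2 * harmonic l) B2 h2).
have Hv : forall i, (fun l => f (k l).+1 i 0) @ \oo --> fbar i 0.
  move=> i; apply: (cvg_by_bound _ _ (fun l => 2 * harmonic l)) => // l.
  have := mx_comp_le (fbar - f (k l).+1) i 0; rewrite !mxE => H.
  exact: le_trans H (B2 l).
have Hcst : forall (h : 'cV[R]_n) i, (fun l : nat => h i 0) @ \oo --> h i 0.
  by move=> h i; exact: cvg_cst.
have Hn2 : (fun l => norm2 (f (k l) - fbar)) @ \oo --> (0 : R).
  have -> : (0 : R) = Num.sqrt (dotv (fbar - fbar) (fbar - fbar)).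
    rewrite subrr /dotv big1 ?sqrtr0 // => i _; by rewrite mxE mul0r.
  rewrite /norm2.
  apply: (@continuous_cvg _ _ _ _ _
    (fun l => dotv (f (k l) - fbar) (f (k l) - fbar)) Num.sqrt).
    exact: sqrt_continuous.
  by apply: dotv_cvg; apply: cvg_compB.
pose G := grad (poissonF A y beta) fbar.
have Hg : forall i, (fun l => grad (poissonF A y beta) (f (k l)) i 0) @ \oo --> G i 0.
  move=> i; apply: (cvg_by_bound _ _ (fun l => L * norm2 (f (k l) - fbar))).
    move=> l; apply: le_trans (HL _ _ (fnn _) fbnn).
    rewrite /G; move: (grad (poissonF A y beta) (f (k l))) (grad (poissonF A y beta) fbar) => a b.
    by have := comp_le_norm2 (a - b) i; rewrite !mxE distrC.
  by rewrite -(mulr0 L); apply: cvgMr.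
have Hrho : (fun l => tau * pen (f (k l).+1)) @ \oo --> tau * pen fbar.
  have Hc := (subspace_continuousP _ _).1 Hcont fbar fbnn.
  have Hw : (fun l => f (k l).+1) @ \oo --> within [set x | nonneg x] (nbhs fbar).
    move=> P HP; have [N _ HN] := Hvmx _ HP; exists N => // j Nj.
    by apply: (HN j Nj); exact: fnn.
  have Hr := cvg_trans (cvg_app (rho_pen tau pen) Hw) Hc.
  have E : from_subspace [set x | nonneg x] (rho_pen tau pen) fbar = (tau * pen fbar)%:E.
    by rewrite /from_subspace /rho_pen fbnn.
  rewrite E in Hr.
  have Hr' : (fun l => rho_pen tau pen (f (k l).+1)) @ \oo --> (tau * pen fbar)%:E.
    exact: Hr.
  have [_ Hf] := (fine_cvgP _ _).1 Hr'.
  have -> : (fun l => tau * pen (f (k l).+1)) =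
            fine \o (fun l => rho_pen tau pen (f (k l).+1)).
    by apply: funext => l; rewrite /comp /rho_pen fnn.
  exact: Hf.
have Q : forall h, nonneg h -> tau * pen fbar <=
    dotv (h - fbar) G + abar / 2 * dotv (h - fbar) (h - fbar) + tau * pen h.
  move=> h hnn.
  pose lhs := fun l => dotv (f (k l).+1 - f (k l)) (grad (poissonF A y beta) (f (k l)))
              + tau * pen (f (k l).+1).
  pose rhs := fun l => dotv (h - f (k l)) (grad (poissonF A y beta) (f (k l)))
              + abar / 2 * dotv (h - f (k l)) (h - f (k l)) + tau * pen h.
  have HLl : lhs @ \oo --> tau * pen fbar.
    rewrite -[X in _ --> X]add0r; apply: cvgD => //.
    have -> : (0 : R) = dotv (fbar - fbar) G.
      by rewrite subrr /dotv big1 // => i _; rewrite mxE mul0r.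
    by apply: dotv_cvg => //; apply: cvg_compB.
  have HRr : rhs @ \oo --> dotv (h - fbar) G + abar / 2 * dotv (h - fbar) (h - fbar) + tau * pen h.
    apply: cvgD; last exact: cvg_cst.
    apply: cvgD.
      by apply: dotv_cvg => //; apply: cvg_compB.
    by apply: cvgMr; apply: dotv_cvg; apply: cvg_compB.
  have Hle : forall l, lhs l <= rhs l.
    move=> l; have [_ _ Hal] := Hk l.
    have := Hmin (k l) h; rewrite /prox_obj /rho_pen fnn hnn -!EFinD lee_fin.
    rewrite !norm2_sq => H.
    have a0 := alp0 (k l).
    have D2 := dotv_ge0 (h - f (k l)).
    have E1 : 0 <= alpha (k l) / 2 * dotv (f (k l).+1 - f (k l)) (f (k l).+1 - f (k l)).
      by apply: mulr_ge0; [apply: divr_ge0 => //; exact: ltW | exact: dotv_ge0].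
    have E2 : alpha (k l) / 2 * dotv (h - f (k l)) (h - f (k l)) <=
              abar / 2 * dotv (h - f (k l)) (h - f (k l)).
      by apply: ler_wpM2r => //; lra.
    rewrite /lhs /rhs.
    move: H E1 E2.
    set X1 := dotv _ (grad _ _); set X2 := dotv (h - _) (grad _ _).
    set P1 := tau * pen _; set P2 := tau * pen h.
    set Y1 := alpha _ / 2 * _; set Y2 := alpha _ / 2 * _; set Z := abar / 2 * _.
    lra.
  by apply: (ler_cvg_to HLl HRr); apply: nearW; exact: Hle.
apply: Hncrit; exists (- G); split; last by rewrite addrN.
move=> h /=; rewrite /rho_pen fbnn.
case hnn: (nonneg h); last by rewrite leey.
rewrite -EFinD lee_fin dotvNl dotvC.
set d := dotv (h - fbar) G; set q := dotv (h - fbar) (h - fbar).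
have q0 : 0 <= q := dotv_ge0 _.
have ab0 : 0 < abar := lt_le_trans am0 Habar.
set c := abar / 2 * q.
have c0 : 0 <= c by apply: mulr_ge0 => //; apply: divr_ge0 => //; exact: ltW.
apply/ler_addgt0Pr => e e0.
have D0 : 0 < c + e + 1 by lra.
pose t := e / (c + e + 1).
have tp : 0 < t by apply: divr_gt0.
have tl : t <= 1 by rewrite /t ler_pdivrMr // mul1r; lra.
pose ht := t *: h + (1 - t) *: fbar.
have htnn : nonneg ht.
  apply/forallP => i; rewrite !mxE.
  move/forallP: hnn => /(_ i) hi; move/forallP: fbnn => /(_ i) fi.
  apply: addr_ge0; apply: mulr_ge0 => //; [exact: ltW | lra].
have Hd : ht - fbar = t *: (h - fbar).
  by apply/matrixP => i j; rewrite !mxE; ring.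
have Qt := Q ht htnn.
rewrite Hd !dotvZl [dotv (h - fbar) (t *: _)]dotvC dotvZl -/d -/q in Qt.
have Cv := Hconv h fbar t.
rewrite /rho_pen -/ht htnn hnn fbnn -!EFinM -EFinD lee_fin in Cv.
have /(_ (ltW tp) tl) Cv' := fun a b => Cv (introT andP (conj a b)).
have K1 : t * (tau * pen fbar - d - tau * pen h - c * t) <= 0.
  rewrite /c; lra.
rewrite pmulr_rle0 // in K1.
have K2 : c * t <= e.
  by rewrite /t mulrA ler_pdivrMr //; nra.
lra.
Qed.
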